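(* Let $\mathbb{X},\mathbb{X}'\subseteq\mathbb{P}^{k-1}$ be arithmetically Gorenstein sets of $\mathbb{F}_q$-rational points with $\Delta\mathrm{HF}_{\mathbb{X}}=\Delta\mathrm{HF}_{\mathbb{X}'}$ equal to $1,k-1,k-1,1$ in degrees $0,1,2,3$ and $0$ in degrees $\ge4$. Let $L,L'\in P_1$ be linear forms with $L$ vanishing at no point of $\mathbb{X}$ and $L'$ vanishing at no point of $\mathbb{X}'$, and let $\varphi_{\mathbb{X}},\varphi_{\mathbb{X}'}\in\mathcal{D}_{-3}$ be homogeneous elements with $(I_{\mathbb{X}}+\langle L\rangle)^\perp=P\circ\varphi_{\mathbb{X}}$ and $(I_{\mathbb{X}'}+\langle L'\rangle)^\perp=P\circ\varphi_{\mathbb{X}'}$. Let $A\in\mathrm{GL}_k(\mathbb{F}_q)$ satisfy $\lambda_A(L)=L'$. If $\Lambda_A(\mathbb{X})=\mathbb{X}'$, then there is $c\in\mathbb{F}_q\setminus\{0\}$ with $\varphi_{\mathbb{X}'}(\lambda_A(g))=c\,\varphi_{\mathbb{X}}(g)$ for all $g\in P_3$.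
   Context: $P=\mathbb{F}_q[x_1,\dots,x_k]$ standard graded. For a set $\mathbb{X}$ of distinct $\mathbb{F}_q$-rational points of $\mathbb{P}^{k-1}$, $I_{\mathbb{X}}$ is its homogeneous vanishing ideal, $R=P/I_{\mathbb{X}}$, $\mathrm{HF}_{\mathbb{X}}(i)=\dim R_i$ ($0$ for $i<0$), $\Delta\mathrm{HF}_{\mathbb{X}}(i)=\mathrm{HF}_{\mathbb{X}}(i)-\mathrm{HF}_{\mathbb{X}}(i-1)$. $\mathbb{X}$ is arithmetically Gorenstein if $R$ is Gorenstein; then $P/(I_{\mathbb{X}}+\langle L\rangle)$ is an Artinian Gorenstein ring (here with top degree 3). $\mathcal{D}=\bigoplus_j\mathcal{D}_{-j}$, $\mathcal{D}_{-j}=\mathrm{Hom}_{\mathbb{F}_q}(P_j,\mathbb{F}_q)$, is a $P$-module via contraction $(f\circ\psi)(g)=\psi(fg)$; for an ideal $J$, $J^\perp=\{\psi:f\circ\psi=0\ \forall f\in J\}$ and $P\circ\varphi$ is the submodule generated by $\varphi$. For $A\in\mathrm{GL}_k(\mathbb{F}_q)$, $\Lambda_A(p)=Ap$ on $\mathbb{P}^{k-1}$ and $\lambda_A:P\to P$ is the graded automorphism $\lambda_A(f)(v)=f(A^{-1}v)$. *)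

(* Defs.v *)
From HB Require Import structures.
From mathcomp Require Import all_boot all_order all_algebra.
From mathcomp Require Import mpoly.

Set Implicit Arguments.
Unset Strict Implicit.
Unset Printing Implicit Defensive.

Import Order.TTheory GRing.Theory.
Local Open Scope ring_scope.

Section Defs.
Variables (F : finFieldType) (k : nat).

(* P = F[x_1..x_k]; points of P^{k-1} are given by representative column vectors. *)
Notation P := {mpoly F[k]}.
Notation pt := 'cV[F]_k.

Definition ev (f : P) (v : pt) : F := f.@[fun i => v i 0].

Definition proj_eq (u v : pt) : Prop := exists c : F, c != 0 /\ u = c *: v.

(* X is a set of distinct F-rational points of P^{k-1}
   (one nonzero representative per point) *)
Definition point_set (X : {set pt}) : Prop :=
  (forall v, v \in X -> v != 0) /\
  (forall u v, u \in X -> v \in X -> proj_eq u v -> u = v).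

(* membership in the homogeneous vanishing ideal I_X:
   every homogeneous component of f vanishes at every point of X *)
Definition inIX (X : {set pt}) (f : P) : Prop :=
  forall (d : nat) (v : pt), v \in X -> ev (pihomog mdeg d f) v = 0.

Definition inIXL (X : {set pt}) (L : P) (f : P) : Prop :=
  exists a b : P, inIX X a /\ f = a + L * b.

(* dim_F (R_i) = n where R = P / I_X, i.e. dim_F (P_i / (I_X)_i) = n:
   there is a family of n elements of P_i which is a basis modulo (I_X)_i *)
Definition HF_is (X : {set pt}) (i n : nat) : Prop :=
  exists v : 'I_n -> P,
    (forall j, v j \is i.-homog) /\
    (forall c : 'I_n -> F, inIX X (\sum_(j < n) c j *: v j) -> forall j, c j = 0) /\
    (forall f : P, f \is i.-homog ->
       exists c : 'I_n -> F, inIX X (f - \sum_(j < n) c j *: v j)).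

Definition delta_pattern (i : nat) : int :=
  match i with
  | 0 => 1
  | 1 => (k%:Z - 1)
  | 2 => (k%:Z - 1)
  | 3 => 1
  | _ => 0
  end.

Definition DeltaHF_is_pattern (X : {set pt}) : Prop :=
  exists h : nat -> nat,
    (forall i, HF_is X i (h i)) /\
    (forall i, (h i)%:Z - (if i is j.+1 then (h j)%:Z else 0) = delta_pattern i).

(* socle of the Artinian ring P/J, J given by a membership predicate, is
   one-dimensional over F *)
Definition socle_dim1 (J : P -> Prop) : Prop :=
  exists s : P, ~ J s /\ (forall i : 'I_k, J ('X_i * s)) /\
    (forall f : P, (forall i : 'I_k, J ('X_i * f)) ->
       exists c : F, J (f - c *: s)).

Definition arith_gorenstein (X : {set pt}) : Prop :=
  forall L : P, L \is 1.-homog -> (forall v, v \in X -> ev L v != 0) ->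
    socle_dim1 (inIXL X L).

(* the graded dual D = (+)_j D_{-j}, elements seen as linear functionals on P
   vanishing on P_d for d large; D_{-j}: functionals supported on P_j *)
Definition lin_functional (psi : P -> F) : Prop :=
  forall (a : F) (f g : P), psi (a *: f + g) = a * psi f + psi g.

Definition inD (psi : P -> F) : Prop :=
  lin_functional psi /\
  exists N : nat, forall (d : nat) (g : P), (N <= d)%N -> g \is d.-homog -> psi g = 0.

Definition inD_deg (j : nat) (psi : P -> F) : Prop :=
  lin_functional psi /\
  forall (d : nat) (g : P), d != j -> g \is d.-homog -> psi g = 0.

Definition contr (f : P) (psi : P -> F) : P -> F := fun g => psi (f * g).

Definition in_perp (J : P -> Prop) (psi : P -> F) : Prop :=
  forall f : P, J f -> forall g : P, contr f psi g = 0.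

Definition perp_generated_by (J : P -> Prop) (phi : P -> F) : Prop :=
  forall psi : P -> F, inD psi ->
    (in_perp J psi <-> exists f : P, forall g : P, psi g = contr f phi g).

(* lambda_A(f)(v) = f(A^{-1} v) *)
Definition lambdaA (A : 'M[F]_k) (f : P) : P :=
  f \mPo [tuple \sum_(j < k) (invmx A) i j *: 'X_j | i < k].

Definition LambdaA_maps (A : 'M[F]_k) (X X' : {set pt}) : Prop :=
  (forall u, u \in X -> exists v, v \in X' /\ proj_eq (A *m u) v) /\
  (forall v, v \in X' -> exists u, u \in X /\ proj_eq (A *m u) v).

End Defs.

(* Main.v *)
Require Import Defs.
From HB Require Import structures.
From mathcomp Require Import all_boot all_order all_algebra.
From mathcomp Require Import mpoly.
Import GRing.Theory.
Local Open Scope ring_scope.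


Section Helpers.
Variables (F : finFieldType) (k : nat).
Local Notation P := {mpoly F[k]}.

Definition tl (M : 'M[F]_k) : k.-tuple P :=
  [tuple \sum_(j < k) M i j *: 'X_j | i < k].

Lemma tl_homog M i : tnth (tl M) i \is 1.-homog.
Proof.
rewrite tnth_mktuple; apply: rpred_sum => j _; apply: rpredZ.
by rewrite dhomogX /= mdeg1.
Qed.

Lemma comp_homog (t : k.-tuple P) d p :
  (forall i, tnth t i \is 1.-homog) -> p \is d.-homog -> p \mPo t \is d.-homog.
Proof.
move=> ht /dhomogP hp; rewrite comp_mpolyEX big_seq; apply: rpred_sum => m mp.
apply: rpredZ; rewrite comp_mpolyX.
have -> : d = (\sum_i m i)%N by rewrite -(hp m mp); exact: mdegE.
elim/big_rec2: _ => [|i q s _ hq]; first exact: dhomog1.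
have -> : (m i + s = 1 * m i + s)%N by rewrite mul1n.
by apply: dhomogM => //; apply: dhomogMn.
Qed.

Lemma pihomog_comp (t : k.-tuple P) d p :
  (forall i, tnth t i \is 1.-homog) ->
  pihomog mdeg d (p \mPo t) = pihomog mdeg d p \mPo t.
Proof.
move=> ht; elim/mpolyind: p; first by rewrite !linear0.
move=> c m p msupp cn0 ihp; rewrite !linearP /= {}ihp.
have hX : 'X_[m] \mPo t \is (mdeg m).-homog.
  by apply: comp_homog => //; rewrite dhomogX.
congr (c *: _ + _); case: (eqVneq (mdeg m) d) => wgtm.
+ have /eqP := wgtm; rewrite -(dhomogX F) => /pihomog_dE ->.
  by move: hX; rewrite wgtm => /pihomog_dE ->.
rewrite (pihomog_ne0 wgtm hX).
by rewrite (pihomog_ne0 wgtm) ?linear0 // dhomogX.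
Qed.

Lemma meval_scale d (p : P) c w : p \is d.-homog ->
  p.@[fun i => c * w i] = c ^+ d * p.@[w].
Proof.
move=> /dhomogP hp; rewrite !mevalE mulr_sumr big_seq [RHS]big_seq.
apply: eq_bigr => m mp.
under eq_bigr do rewrite exprMn.
by rewrite big_split /= prodrXr -mdegE hp // mulrCA.
Qed.

Lemma comp_comp (p : P) (t1 t2 : k.-tuple P) :
  (p \mPo t1) \mPo t2 = p \mPo [tuple (tnth t1 i \mPo t2) | i < k].
Proof.
rewrite [p \mPo t1]comp_mpolyEX [RHS]comp_mpolyEX raddf_sum /=.
apply: eq_bigr => m _; rewrite comp_mpolyZ !comp_mpolyX rmorph_prod /=.
congr (_ *: _); apply: eq_bigr => i _; by rewrite rmorphXn tnth_mktuple.
Qed.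

Lemma tl_comp M N :
  [tuple (tnth (tl M) i \mPo tl N) | i < k] = tl (M *m N).
Proof.
apply: eq_from_tnth => i; rewrite !tnth_mktuple raddf_sum /=.
under eq_bigr do rewrite comp_mpolyZ comp_mpolyXU -tnth_nth tnth_mktuple scaler_sumr.
rewrite exchange_big /=; apply: eq_bigr => l _.
rewrite mxE scaler_suml; apply: eq_bigr => j _; by rewrite scalerA.
Qed.

Lemma tl1 : tl 1%:M = [tuple 'X_i | i < k].
Proof.
apply: eq_from_tnth => i; rewrite !tnth_mktuple (bigD1 i) //= big1 ?addr0.
  by rewrite mxE eqxx scale1r.
by move=> j /negbTE ji; rewrite mxE eq_sym ji scale0r.
Qed.

Lemma ev_comp (p : P) M (v : 'cV[F]_k) : ev (p \mPo tl M) v = ev p (M *m v).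
Proof.
rewrite /ev comp_mpoly_meval; apply: meval_eq => i.
rewrite tnth_mktuple raddf_sum mxE /=; apply: eq_bigr => j _.
by rewrite mevalZ mevalXU.
Qed.

Lemma homog0_C (p : P) : p \is 0.-homog -> p = (p@_0)%:MP.
Proof.
move=> /dhomogP hp; apply: msize1_polyC; rewrite mmeasureE.
by rewrite big_seq; elim/big_rec: _ => // m s mp hs; rewrite geq_max hs andbT (hp m mp).
Qed.

Lemma lin_props (phi : P -> F) : lin_functional phi ->
  [/\ phi 0 = 0, forall f g, phi (f + g) = phi f + phi g &
      forall a f, phi (a *: f) = a * phi f].
Proof.
move=> h; have h0 : phi 0 = 0.
  have := h 1 0 0; rewrite scale1r addr0 mul1r => /(congr1 (fun x => x - phi 0)).
  by rewrite /= addrK subrr => /esym.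
split=> //.
  by move=> f g; rewrite -[f]scale1r h mul1r scale1r.
by move=> a f; rewrite -[a *: f]addr0 h h0 addr0.
Qed.

Lemma lin_sum (phi : P -> F) (n : nat) (G : 'I_n -> P) : lin_functional phi ->
  phi (\sum_(i < n) G i) = \sum_(i < n) phi (G i).
Proof.
case/lin_props => h0 hD _.
by elim/big_rec2: _ => [|i y1 y2 _ <-]; rewrite ?h0 ?hD.
Qed.

Lemma phi_pihomog (phi : P -> F) : inD_deg 3 phi ->
  forall g, phi g = phi (pihomog mdeg 3 g).
Proof.
move=> [hl hv] g.
rewrite {1}(@pihomog_partitionE _ _ mdeg (msize g + 4) g) ?leq_addr //.
have h34 : (3 < msize g + 4)%N by rewrite ltn_addl.
rewrite lin_sum // (bigD1 (Ordinal h34)) //=.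
rewrite big1 ?addr0 // => i /eqP ne; apply: (hv i); last exact: pihomogP.
by apply/eqP => e; apply: ne; apply: val_inj.
Qed.


Lemma ev0_homog d (p : P) : p \is d.-homog -> (0 < d)%N -> p.@[fun _ => 0] = 0.
Proof.
move=> hp d0; have := meval_scale _ _ 0 (fun _ => 0) hp.
rewrite expr0n (gtn_eqF d0) => h.
transitivity (p.@[fun i : 'I_k => 0 * 0]); first by apply: meval_eq => i; rewrite mul0r.
by rewrite h; apply: mul0r.
Qed.

Lemma ev0_homog0 (p : P) v : p \is 0.-homog -> p.@[fun _ => 0] = ev p v.
Proof.
move=> hp; have := meval_scale _ _ 0 (fun i => v i 0) hp.
rewrite /ev expr0 mul1r => <-; apply: meval_eq => i; by rewrite mul0r.
Qed.

Lemma inIX_ev0 (X : {set 'cV[F]_k}) v a : v \in X -> inIX X a -> a.@[fun _ => 0] = 0.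
Proof.
move=> vX ha.
rewrite (@pihomog_partitionE _ _ mdeg (msize a + 1) a) ?leq_addr // raddf_sum /=.
apply: big1 => i _; case: (posnP i) => [i0|ip].
  rewrite (ev0_homog0 _ v); first by rewrite i0 ha.
  by rewrite -[X in X.-homog]i0; apply: pihomogP.
by apply: (ev0_homog _ _ (pihomogP _ _ _)).
Qed.

Lemma inIX_comp (A : 'M[F]_k) X X' a : A \in unitmx -> LambdaA_maps A X X' ->
  inIX X a -> inIX X' (a \mPo tl (invmx A)).
Proof.
move=> uA [_ hm] ha d v vX'.
rewrite pihomog_comp; last exact: tl_homog.
rewrite ev_comp; have [u [uX [c [c0 hc]]]] := hm v vX'.
have -> : invmx A *m v = c^-1 *: u.
  by rewrite -[u](mulKmx uA) hc scalemxAr scalerA mulVf // scale1r.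
rewrite /ev (@meval_eq _ _ _ (fun i => c^-1 * u i 0)); last by move=> i; rewrite mxE.
rewrite (meval_scale _ _ _ _ (pihomogP _ _ _)); have := ha d u uX; rewrite /ev => ->; exact: mulr0.
Qed.

End Helpers.
Arguments tl {F k}.
Arguments tl_homog {F k}.
Arguments comp_homog {F k}.
Arguments pihomog_comp {F k}.
Arguments meval_scale {F k}.
Arguments comp_comp {F k}.
Arguments tl_comp {F k}.
Arguments tl1 {F k}.
Arguments ev_comp {F k}.
Arguments homog0_C {F k}.
Arguments lin_props {F k}.
Arguments lin_sum {F k}.
Arguments phi_pihomog {F k}.
Arguments ev0_homog {F k}.
Arguments ev0_homog0 {F k}.
Arguments inIX_ev0 {F k}.
Arguments inIX_comp {F k}.

Theorem proposition9p1 (F : finFieldType) (k : nat)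
  (X X' : {set 'cV[F]_k}) (L L' : {mpoly F[k]})
  (phi phi' : {mpoly F[k]} -> F) (A : 'M[F]_k) :
  point_set X -> point_set X' ->
  arith_gorenstein X -> arith_gorenstein X' ->
  DeltaHF_is_pattern X -> DeltaHF_is_pattern X' ->
  L \is 1.-homog -> L' \is 1.-homog ->
  (forall v, v \in X -> ev L v != 0) ->
  (forall v, v \in X' -> ev L' v != 0) ->
  inD_deg 3 phi -> inD_deg 3 phi' ->
  perp_generated_by (inIXL X L) phi ->
  perp_generated_by (inIXL X' L') phi' ->
  A \in unitmx ->
  lambdaA A L = L' ->
  LambdaA_maps A X X' ->
  exists c : F, c != 0 /\
    forall g : {mpoly F[k]}, g \is 3.-homog -> phi' (lambdaA A g) = c * phi g.
Proof.
move=> _ _ _ _ _ [h [hHF hD]] _ hL' _ _ hphi hphi' hperp hperp' uA hLL' hmap.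
pose t := tl (invmx A).
have lamE g : lambdaA A g = g \mPo t by [].
have [v0 v0X] : exists v0, v0 \in X'.
  have h0 : h 0%N = 1%N.
    by have := hD 0%N; rewrite /delta_pattern subr0 => /eqP; rewrite eqz_nat => /eqP.
  have [w [_ [hind _]]] := hHF 0%N; rewrite h0 in w hind *.
  case: (set_0Vmem X') => [X'0|[v0 v0X]]; last by exists v0.
  have hI : inIX X' (\sum_(j < 1) (fun _ => 1) j *: w j) by move=> d v; rewrite X'0 inE.
  by move/eqP: (hind _ hI ord0); rewrite oner_eq0.
have tH : forall i, tnth t i \is 1.-homog by move=> i; exact: tl_homog.
have [hl' hv'] := hphi'.
have [hl hv] := hphi.
have inDphi' : inD phi'.
  split=> //; exists 4%N => d g hd; apply: hv'; by apply: contraTneq hd => ->.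
have perp1 : in_perp (inIXL X' L') phi'.
  by apply/(hperp' _ inDphi'); exists 1 => g; rewrite /contr mul1r.
pose psi g := phi' (g \mPo t).
have inDpsi : inD psi.
  split.
    by move=> a f g; rewrite /psi comp_mpolyD comp_mpolyZ.
  exists 4%N => d g hd hg; apply: (hv' d); first by apply: contraTneq hd => ->.
  exact: comp_homog.
have perpsi : in_perp (inIXL X L) psi.
  move=> f [a [b [ha ->]]] g; rewrite /contr /psi rmorphM /= rmorphD rmorphM /=.
  apply: perp1; exists (a \mPo t), (b \mPo t); split; last by rewrite -hLL'.
  exact: inIX_comp hmap ha.
have [f hf] := (proj1 (hperp psi inDpsi)) perpsi.
pose c := (pihomog mdeg 0 f)@_0.
have key : forall g, g \is 3.-homog -> psi g = c * phi g.
  move=> g hg; rewrite hf /contr (phi_pihomog _ hphi).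
  have -> : pihomog mdeg 3 (f * g) = pihomog mdeg 0 f * g.
    rewrite {1}(@pihomog_partitionE _ _ mdeg (msize f + 1) f) ?leq_addr //.
    have h0 : (0 < msize f + 1)%N by rewrite addn1.
    rewrite mulr_suml raddf_sum (bigD1 (Ordinal h0)) //= big1 ?addr0.
      apply: pihomog_dE; rewrite -[3%N]/(0 + 3)%N; apply: dhomogM => //; exact: pihomogP.
    move=> i /eqP ne; apply: (pihomog_ne0 (d := (i + 3)%N)).
      rewrite -{2}[3%N]add0n eqn_add2r; apply/eqP => e; apply: ne; exact: val_inj.
    apply: dhomogM => //; exact: pihomogP.
  have [_ _ hZ] := lin_props _ hl.
  have hc0 := homog0_C _ (pihomogP mdeg 0 f).
  by rewrite hc0 mul_mpolyC hZ.
exists c; split; last by move=> g hg; rewrite lamE; apply: key.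
apply/eqP => c0.
have zero3 : forall g, g \is 3.-homog -> phi' g = 0.
  move=> g hg.
  have -> : g = (g \mPo tl A) \mPo t.
    by rewrite comp_comp tl_comp mulmxV // tl1 comp_mpoly_id.
  by rewrite -/(psi _) key ?c0 ?mul0r //; apply: comp_homog => // i; exact: tl_homog.
have zero : forall g, phi' g = 0.
  by move=> g; rewrite (phi_pihomog _ hphi') zero3 //; exact: pihomogP.
pose psi0 (g : {mpoly F[k]}) := g.@[fun _ => 0].
have inDpsi0 : inD psi0.
  split.
    by move=> a f' g; rewrite /psi0 mevalD mevalZ.
  exists 1%N => d g hd hg; exact: ev0_homog hg hd.
have perp0 : in_perp (inIXL X' L') psi0.
  move=> f' [a [b [ha ->]]] g; rewrite /contr /psi0 !mevalM mevalD mevalM.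
  by rewrite (inIX_ev0 _ v0 a v0X ha) (ev0_homog _ _ hL') // mul0r add0r mul0r.
have [f' hf'] := (proj1 (hperp' psi0 inDpsi0)) perp0.
have := hf' 1; rewrite /psi0 /contr meval1 zero => /eqP; by rewrite oner_eq0.
Qed.
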